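(* Let $K$ be a field of characteristic $\neq 2$ containing a square root $i$ of $-1$, and let $A\in K\setminus\{0\}$. For every integer $n\ge1$, $$\mathcal C_A(n)=\#\{T:\ T \text{ is on the } (\alpha,0)\text{-Euclid tree for some integer }\alpha\ge1,\ \max T=n\}+2,$$ and consequently $\mathcal C_A(n)=C_0(n)+1$.
   Context: Solutions are triples $(x,y,z)\in K[t]^3$ with $x^2+y^2+z^2=Axyz$; $\deg 0=-\infty$; the height is $h(x,y,z)=\max\{\deg x,\deg y,\deg z\}$; a Markoff triple is a solution with $h>0$ and $\deg x\le\deg y\le\deg z$; its signature is $S(x,y,z)=(\deg x,\deg y,\deg z)$. $\mathcal C_A(n)$ is the number of distinct signatures $S(P)$ of Markoff triples $P$ with $h(P)=n$. For integers $\alpha\ge1$ (more generally $\alpha\ge 0$) and $\beta\ge0$, define on triples of integers $\Gamma_{\beta,1}(\tau_1,\tau_2,\tau_3)=(\tau_2,\tau_3,\tau_2+\tau_3+\beta)$ and $\Gamma_{\beta,2}(\tau_1,\tau_2,\tau_3)=(\tau_1,\tau_3,\tau_1+\tau_3+\beta)$. The $(\alpha,\beta)$-Euclid tree is the set of triples obtained from the root $(\alpha,\alpha,2\alpha+\beta)$ by finitely many (possibly zero) applications of $\Gamma_{\beta,1},\Gamma_{\beta,2}$; ''$T$ is on the tree'' means $T$ belongs to this set, and $\max T$ is the largest entry of $T$. Triples are counted as distinct elements. For $\beta\ge0$ and $n\ge1$, $C_\beta(n)=\#\{T: T\text{ is on the }(\alpha,\beta)\text{-Euclid tree for some integer }\alpha\ge1,\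 \max T=n\}+1$. *)

(* Defs.v *)
From HB Require Import structures.
From mathcomp Require Import all_boot all_order all_algebra.
From Stdlib Require Import ClassicalEpsilon.
Set Implicit Arguments. Unset Strict Implicit. Unset Printing Implicit Defensive.
Import Order.TTheory GRing.Theory Num.Theory.
Local Open Scope ring_scope.

Definition asbool (P : Prop) : bool :=
  if excluded_middle_informative P then true else false.

(* Degrees are encoded by [size]: size p = deg p + 1, and size 0 = 0 encodes deg 0 = -oo.
   This encoding is strictly monotone, so comparisons and distinctness are preserved. *)

Definition markoff_sol (K : fieldType) (A : K) (x y z : {poly K}) : Prop :=
  x ^+ 2 + y ^+ 2 + z ^+ 2 = A%:P * x * y * z.

(* h(x,y,z) + 1 = max of the sizes (so h = n  <->  hsize = n.+1, for n >= 0). *)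
Definition hsize (K : fieldType) (x y z : {poly K}) : nat :=
  maxn (size x) (maxn (size y) (size z)).

Definition markoff_triple (K : fieldType) (A : K) (x y z : {poly K}) : Prop :=
  [/\ markoff_sol A x y z, (1 < hsize x y z)%N & (size x <= size y <= size z)%N].

Definition is_signature (K : fieldType) (A : K) (n : nat) (s : nat * nat * nat) : Prop :=
  exists x y z : {poly K}, [/\ markoff_triple A x y z, hsize x y z = n.+1 &
                               s = (size x, size y, size z)].

(* C_A(n): number of distinct signatures of Markoff triples of height n
   (all sizes are <= n+1, so the signatures live in 'I_(n+2)^3). *)
Definition CA (K : fieldType) (A : K) (n : nat) : nat :=
  #|[set s : 'I_n.+2 * 'I_n.+2 * 'I_n.+2 |
       asbool (is_signature A n (nat_of_ord s.1.1, nat_of_ord s.1.2, nat_of_ord s.2))]|.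

Definition Gamma1 (beta : nat) (t : nat * nat * nat) : nat * nat * nat :=
  let: (t1, t2, t3) := t in (t2, t3, t2 + t3 + beta)%N.
Definition Gamma2 (beta : nat) (t : nat * nat * nat) : nat * nat * nat :=
  let: (t1, t2, t3) := t in (t1, t3, t1 + t3 + beta)%N.

Inductive on_tree (alpha beta : nat) : nat * nat * nat -> Prop :=
| on_tree_root : on_tree alpha beta (alpha, alpha, 2 * alpha + beta)%N
| on_tree_G1 t : on_tree alpha beta t -> on_tree alpha beta (Gamma1 beta t)
| on_tree_G2 t : on_tree alpha beta t -> on_tree alpha beta (Gamma2 beta t).

Definition max3 (t : nat * nat * nat) : nat := maxn t.1.1 (maxn t.1.2 t.2).

(* #{T : T on the (alpha,beta)-Euclid tree for some alpha >= 1, max T = n}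
   (entries are <= n, so T lives in 'I_(n+1)^3). *)
Definition tree_count (beta n : nat) : nat :=
  #|[set t : 'I_n.+1 * 'I_n.+1 * 'I_n.+1 |
       let T := (nat_of_ord t.1.1, nat_of_ord t.1.2, nat_of_ord t.2) in
       asbool (exists alpha : nat, (1 <= alpha)%N /\ on_tree alpha beta T)
       && (max3 T == n)]|.

Definition Cbeta (beta n : nat) : nat := (tree_count beta n).+1.

(* Main.v *)
Require Import Defs.
From HB Require Import structures.
From mathcomp Require Import all_boot all_order all_algebra.
From mathcomp Require Import ring zify.
From Stdlib Require Import ClassicalEpsilon.
Import Order.TTheory GRing.Theory Num.Theory.
Local Open Scope ring_scope.

Section P.
Variable K : fieldType.
Implicit Types x y z : {poly K}.

Lemma size_sq x : size (x ^+ 2) = ((size x).*2).-1.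
Proof.
have [->|x0] := eqVneq x 0; first by rewrite expr0n size_poly0.
by rewrite expr2 size_mul // addnn.
Qed.

Lemma size_sum_sq x y : (size (x ^+ 2 + y ^+ 2)%R <= maxn ((size x).*2).-1 ((size y).*2).-1)%N.
Proof. by rewrite -!size_sq size_polyD. Qed.

Lemma size_Cxy (A : K) x y : A != 0 -> x != 0 -> y != 0 ->
  size (A%:P * x * y) = (size x + size y)%N.-1.
Proof.
move=> A0 x0 y0.
rewrite size_mul ?mulf_neq0 ?polyC_eq0 // size_mul ?polyC_eq0 // size_polyC A0.
have : (0 < size x)%N by rewrite size_poly_gt0.
by rewrite add1n; case: (size x).
Qed.

Lemma classif (A : K) x y z : A != 0 -> markoff_sol A x y z ->
  (1 < size z)%N -> (size x <= size y <= size z)%N ->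
  (size x = 0%N /\ size y = size z) \/
  (0 < size x)%N /\ size z = (size x + size y)%N.-1.
Proof.
move=> A0 H hz /andP[hxy hyz].
have z0 : z != 0 by rewrite -size_poly_gt0; lia.
have [x0|x0] := eqVneq x 0.
  left; split; first by rewrite x0 size_poly0.
  move: H; rewrite /markoff_sol x0 => H0.
  have H : y ^+ 2 = - z ^+ 2.
    have -> : y ^+ 2 = (0 : {poly K}) ^+ 2 + y ^+ 2 + z ^+ 2 - z ^+ 2 by ring.
    by rewrite H0 mulr0 !mul0r sub0r.
  have : size (y ^+ 2) = size (z ^+ 2) by rewrite H size_polyN.
  rewrite !size_sq; lia.
right.
have sx : (0 < size x)%N by rewrite size_poly_gt0.
split => //.
have y0 : y != 0 by rewrite -size_poly_gt0; lia.
set w := A%:P * x * y - z.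
have Hzw : z * w = x ^+ 2 + y ^+ 2.
  rewrite /w; move: H; rewrite /markoff_sol => H.
  apply/eqP; rewrite -subr_eq0.
  have -> : z * (A%:P * x * y - z) - (x ^+ 2 + y ^+ 2)
          = A%:P * x * y * z - (x ^+ 2 + y ^+ 2 + z ^+ 2) by ring.
  by rewrite H subrr.
have hP := @size_Cxy A x y A0 x0 y0.
have hb := size_sum_sq x y.
rewrite -Hzw in hb.
case: (ltngtP (size z) (size (A%:P * x * y))) => c.
- have sw : size w = size (A%:P * x * y).
    by rewrite /w size_polyDl // size_polyN.
  have w0 : w != 0 by rewrite -size_poly_gt0; lia.
  move: hb; rewrite size_mul // sw => hb.
  have hb2 : ((size z + size (A%:P*x*y)%R).-1 <= maxn ((size x).*2).-1 ((size y).*2).-1)%N := hb.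
  lia.
- have sw : size w = size z.
    by rewrite /w addrC size_polyDl ?size_polyN.
  have w0 : w != 0 by rewrite -size_poly_gt0; lia.
  move: hb; rewrite size_mul // sw => hb.
  have hb2 : ((size z + size z).-1 <= maxn ((size x).*2).-1 ((size y).*2).-1)%N := hb.
  lia.
- lia.
Qed.
End P.
Section E.
Variable K : fieldType.
Variables (A i : K).
Hypothesis A0 : A != 0.
Hypothesis hi : i ^+ 2 = -1.

Let I := i%:P : {poly K}.
Lemma hI : I ^+ 2 = -1.
Proof. by rewrite /I -polyC_exp hi polyCN. Qed.
Lemma i0 : i != 0.
Proof. apply/eqP => e; move: hi; rewrite e expr0n /= => /eqP; rewrite eq_sym oppr_eq0 oner_eq0. by []. Qed.

Lemma I0 : I != 0.
Proof. by rewrite /I polyC_eq0 i0. Qed.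

Lemma tree_exist s : forall a b, (a + b <= s)%N -> (1 <= a)%N -> (1 <= b)%N ->
  exists x y z : {poly K}, [/\ markoff_sol A x y z, size x = a.+1, size y = b.+1
                           & size z = (a + b).+1].
Proof.
elim: s => [|s IH] a b hs ha hb; first lia.
case: (ltngtP a b) => c.
- have [x [y [z [H hx hy hz]]]] := IH a (b - a)%N ltac:(lia) ha ltac:(lia).
  have x0 : x != 0 by rewrite -size_poly_gt0 hx.
  have z0 : z != 0 by rewrite -size_poly_gt0 hz.
  exists x, z, (A%:P * x * z - y); split.
  + move: H; rewrite /markoff_sol => H.
    apply/eqP; rewrite -subr_eq0.
    have -> : x ^+ 2 + z ^+ 2 + (A%:P * x * z - y) ^+ 2 - A%:P * x * z * (A%:P * x * z - y)
       = x ^+ 2 + y ^+ 2 + z ^+ 2 - A%:P * x * y * z by ring.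
    by rewrite H subrr.
  + by [].
  + by rewrite hz; congr S; lia.
  + rewrite size_polyDl (@size_Cxy K A x z A0 x0 z0) hx hz; first lia.
    rewrite size_polyN hy; lia.
- have [x [y [z [H hx hy hz]]]] := IH (a - b)%N b ltac:(lia) ltac:(lia) hb.
  have y0 : y != 0 by rewrite -size_poly_gt0 hy.
  have z0 : z != 0 by rewrite -size_poly_gt0 hz.
  exists z, y, (A%:P * y * z - x); split.
  + move: H; rewrite /markoff_sol => H.
    apply/eqP; rewrite -subr_eq0.
    have -> : z ^+ 2 + y ^+ 2 + (A%:P * y * z - x) ^+ 2 - A%:P * z * y * (A%:P * y * z - x)
       = x ^+ 2 + y ^+ 2 + z ^+ 2 - A%:P * x * y * z by ring.
    by rewrite H subrr.
  + by rewrite hz; congr S; lia.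
  + by [].
  + rewrite size_polyDl (@size_Cxy K A y z A0 y0 z0) hy hz; first lia.
    rewrite size_polyN hx; lia.
- subst b.
  exists 'X^a, (I * 'X^a), (A%:P * 'X^a * (I * 'X^a)); split.
  + apply/eqP; rewrite -subr_eq0.
    have -> : ('X^a : {poly K}) ^+ 2 + (I * 'X^a) ^+ 2 + (A%:P * 'X^a * (I * 'X^a)) ^+ 2
         - A%:P * 'X^a * (I * 'X^a) * (A%:P * 'X^a * (I * 'X^a))
         = 'X^a ^+ 2 * (1 + I ^+ 2) by ring.
    by rewrite hI subrr mulr0.
  + by rewrite size_polyXn.
  + rewrite size_Cmul ?size_polyXn //; exact: i0.
  + have X0 : ('X^a : {poly K}) != 0 by rewrite -size_poly_gt0 size_polyXn.
    have IX0 : (I * 'X^a) != 0 by rewrite mulf_neq0 // I0.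
    rewrite (@size_Cxy K A _ _ A0 X0 IX0) size_Cmul ?size_polyXn; [lia|exact: i0].
Qed.

Lemma zero_exist n : (1 <= n)%N -> exists x y z : {poly K},
  [/\ markoff_sol A x y z, size x = 0%N, size y = n.+1 & size z = n.+1].
Proof.
move=> hn; exists 0, (I * 'X^n), 'X^n; split.
- apply/eqP; rewrite -subr_eq0.
  have -> : (0 : {poly K}) ^+ 2 + (I * 'X^n) ^+ 2 + 'X^n ^+ 2 - A%:P * 0 * (I * 'X^n) * 'X^n
     = 'X^n ^+ 2 * (1 + I ^+ 2) by ring.
  by rewrite hI subrr mulr0.
- by rewrite size_poly0.
- rewrite size_Cmul ?size_polyXn //; exact: i0.
- by rewrite size_polyXn.
Qed.

Lemma const_exist n : (2%:R : K) != 0 -> (1 <= n)%N -> exists x y z : {poly K},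
  [/\ markoff_sol A x y z, size x = 1%N, size y = n.+1 & size z = n.+1].
Proof.
move=> h2 hn; set c := 2%:R / A.
have c0 : c != 0 by rewrite mulf_neq0 ?invr_eq0.
have hAC : A%:P * c%:P = 2%:R :> {poly K}.
  by rewrite -polyCM /c mulrCA divff // mulr1 polyC_natr.
exists c%:P, ('X^n + I * c%:P), 'X^n; split.
- apply/eqP; rewrite -subr_eq0.
  have -> : c%:P ^+ 2 + ('X^n + I * c%:P) ^+ 2 + 'X^n ^+ 2 - A%:P * c%:P * ('X^n + I * c%:P) * 'X^n
     = c%:P ^+ 2 * (1 + I ^+ 2) + (2%:R - A%:P * c%:P) * ('X^n + I * c%:P) * 'X^n by ring.
  by rewrite hI hAC !subrr !mulr0 !mul0r addr0.
- by rewrite size_polyC c0.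
- rewrite size_polyDl size_polyXn //.
  rewrite /I -polyCM; apply: leq_ltn_trans (size_polyC_leq1 _) _; lia.
- by rewrite size_polyXn.
Qed.
End E.

Lemma asboolE (P : Prop) (b : bool) : (P <-> b) -> asbool P = b.
Proof.
move=> h; rewrite /asbool; case: excluded_middle_informative => p.
  by apply/esym; apply/h.
by case: b h => // h; exfalso; apply: p; apply/h.
Qed.

Section Img.
Variables (N M : nat) (F1 F2 F3 : nat -> nat).
Hypothesis hb : forall k, (k < M)%N -> [/\ (F1 k < N.+1)%N, (F2 k < N.+1)%N & (F3 k < N.+1)%N].

Definition G : {set 'I_N.+1 * 'I_N.+1 * 'I_N.+1} :=
  [set ((inord (F1 k), inord (F2 k), inord (F3 k)) : 'I_N.+1 * 'I_N.+1 * 'I_N.+1) | k : 'I_M].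

Lemma memG (s : 'I_N.+1 * 'I_N.+1 * 'I_N.+1) :
  (s \in G) <-> exists k, [/\ (k < M)%N, nat_of_ord s.1.1 = F1 k,
                              nat_of_ord s.1.2 = F2 k & nat_of_ord s.2 = F3 k].
Proof.
split.
  case/imsetP => k _ ->; have [h1 h2 h3] := hb _ (ltn_ord k).
  by exists k; rewrite /= !inordK.
case => k [hk e1 e2 e3]; have [h1 h2 h3] := hb _ hk.
apply/imsetP; exists (Ordinal hk) => //.
case: s e1 e2 e3 => [[s1 s2] s3] /= e1 e2 e3.
by congr (_, _, _); apply: val_inj; rewrite /= inordK // -?e1 -?e2 -?e3.
Qed.

Hypothesis inj1 : forall k l, (k < M)%N -> (l < M)%N -> F1 k = F1 l -> k = l.

Lemma cardG : #|G| = M.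
Proof.
rewrite card_imset ?cardsT ?card_ord //.
move=> k l [] e _ _.
have [h1 _ _] := hb _ (ltn_ord k); have [h1' _ _] := hb _ (ltn_ord l).
apply: val_inj; apply: inj1; [exact: ltn_ord | exact: ltn_ord |].
by rewrite -(inordK h1) -(inordK h1') e.
Qed.
End Img.

Lemma mk_sig (K : fieldType) (A : K) n (x y z : {poly K}) : markoff_sol A x y z ->
  (size x <= size y)%N -> (size y <= size z)%N -> size z = n.+1 -> (1 <= n)%N ->
  is_signature A n (size x, size y, size z).
Proof.
move=> H hxy hyz hz hn.
have hh : hsize x y z = n.+1.
  by rewrite /hsize (maxn_idPr hyz) (maxn_idPr (leq_trans hxy hyz)).
exists x, y, z; split => //; split => //; first by rewrite hh.
by rewrite hxy hyz.
Qed.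

Lemma sigchar (K : fieldType) (A i : K) : A != 0 -> i ^+ 2 = -1 -> (2%:R : K) != 0 ->
  forall n, (1 <= n)%N -> forall a b c : nat,
  is_signature A n (a, b, c) <->
  (a = 0%N /\ b = n.+1 /\ c = n.+1) \/
  (exists k, (k.*2 <= n)%N /\ a = k.+1 /\ b = (n - k)%N.+1 /\ c = n.+1).
Proof.
move=> A0 hi h2 n hn a b c; split.
  case=> x [y [z [[H hh /andP[hxy hyz]] hn' [-> -> ->]]]].
  have hz : size z = n.+1.
    by rewrite -hn' /hsize (maxn_idPr hyz) (maxn_idPr (leq_trans hxy hyz)).
  have := @classif K A x y z A0 H ltac:(lia) ltac:(by rewrite hxy hyz).
  case=> [[e1 e2]|[e1 e2]]; [left | right]; first by rewrite e1 e2 hz.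
  rewrite hz in e2; exists (size x).-1; rewrite hz.
  set u := size x in e1 e2 hxy *; set v := size y in e2 hxy *; lia.
case=> [[-> [-> ->]]|[k [hk [-> [-> ->]]]]].
  have [x [y [z [H hx hy hz]]]] := @zero_exist K A i hi n hn.
  have := @mk_sig K A n x y z H ltac:(by rewrite hx hy) ltac:(by rewrite hy hz) hz hn.
  by rewrite hx hy hz.
case: k hk => [|k] hk.
  have [x [y [z [H hx hy hz]]]] := @const_exist K A i A0 hi n h2 hn.
  have := @mk_sig K A n x y z H ltac:(by rewrite hx hy) ltac:(by rewrite hy hz) hz hn.
  by rewrite hx hy hz subn0.
have [x [y [z [H hx hy hz]]]] := @tree_exist K A i A0 hi n k.+1 (n - k.+1)%N ltac:(lia) ltac:(lia) ltac:(lia).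
have e : (n - k)%N.+1 = (n - k.+1)%N.+2 by lia.
have hz' : size z = n.+1 by rewrite hz; congr S; lia.
have := @mk_sig K A n x y z H ltac:(rewrite hx hy; lia) ltac:(rewrite hy hz'; lia) hz' hn.
by rewrite hx hy hz'.
Qed.

Lemma tree_inv alpha T : (1 <= alpha)%N -> on_tree alpha 0 T ->
  [/\ (1 <= T.1.1)%N, (T.1.1 <= T.1.2)%N & T.2 = (T.1.1 + T.1.2)%N].
Proof.
move=> ha; elim => [|[[p q] r] _|[[p q] r] _] /=; first by split; lia.
  by case => h1 h2 ->; split; lia.
by case => h1 h2 ->; split; lia.
Qed.

Lemma tree_all s : forall p q, (p + q <= s)%N -> (1 <= p)%N -> (p <= q)%N ->
  exists alpha, (1 <= alpha)%N /\ on_tree alpha 0 (p, q, (p + q)%N).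
Proof.
elim: s => [|s IH] p q hs hp hpq; first lia.
case: (ltngtP p q) => c; last first.
- subst q; exists p; split => //.
  have -> : (p + p)%N = (2 * p + 0)%N by lia.
  exact: on_tree_root.
- lia.
case: (leqP (q - p) p) => c2.
  have [al [ha H]] := IH (q - p)%N p ltac:(lia) ltac:(lia) c2.
  exists al; split => //.
  have -> : (p, q, (p + q)%N) = Gamma1 0 (q - p, p, q - p + p)%N.
    by rewrite /=; congr (_, _, _); lia.
  exact: on_tree_G1.
have [al [ha H]] := IH p (q - p)%N ltac:(lia) hp ltac:(lia).
exists al; split => //.
have -> : (p, q, (p + q)%N) = Gamma2 0 (p, q - p, p + (q - p))%N.
  by rewrite /=; congr (_, _, _); lia.
exact: on_tree_G2.
Qed.

Arguments memG {N M F1 F2 F3} hb s.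
Arguments cardG {N M F1 F2 F3} hb inj1.

Lemma asboolP (P : Prop) : reflect P (asbool P).
Proof. by rewrite /asbool; case: excluded_middle_informative => h; constructor. Qed.

Lemma eq_inord3 N (s : 'I_N.+1 * 'I_N.+1 * 'I_N.+1) a b c :
  (a < N.+1)%N -> (b < N.+1)%N -> (c < N.+1)%N ->
  (s == (inord a, inord b, inord c)) =
  [&& nat_of_ord s.1.1 == a, nat_of_ord s.1.2 == b & nat_of_ord s.2 == c].
Proof.
move=> ha hb hc; destruct s as [[s1 s2] s3]; simpl.
by rewrite !xpair_eqE -!val_eqE /= !inordK // andbA.
Qed.

Lemma CA_card (K : fieldType) (A i : K) : A != 0 -> i ^+ 2 = -1 -> (2%:R : K) != 0 ->
  forall n, (1 <= n)%N -> CA A n = (n./2).+2.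
Proof.
move=> A0 hi h2 n hn.
have hb : forall k, (k < (n./2).+1)%N ->
   [/\ (k.+1 < n.+2)%N, ((n - k).+1 < n.+2)%N & (n.+1 < n.+2)%N].
  by move=> k hk; split; lia.
rewrite /CA.
pose s0 : 'I_n.+2 * 'I_n.+2 * 'I_n.+2 := (inord 0, inord n.+1, inord n.+1).
have -> : [set s : 'I_n.+2 * 'I_n.+2 * 'I_n.+2 |
       asbool (is_signature A n (nat_of_ord s.1.1, nat_of_ord s.1.2, nat_of_ord s.2))]
   = s0 |: G n.+1 (n./2).+1 (fun k => k.+1) (fun k => (n - k).+1) (fun _ => n.+1).
  apply/setP => s; rewrite !inE.
  apply: asboolE; rewrite (@sigchar K A i A0 hi h2 n hn).
  rewrite /s0 eq_inord3 //; split.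
    case=> [[e1 [e2 e3]]|[k [hk [e1 [e2 e3]]]]].
      by rewrite e1 e2 e3 !eqxx.
    apply/orP; right; apply/(memG hb); exists k; split => //; lia.
  case/orP.
    by case/and3P => /eqP e1 /eqP e2 /eqP e3; left.
  case/(memG hb) => k [hk e1 e2 e3]; right; exists k; split; first lia.
  by [].
rewrite cardsU1 (cardG hb); last by move=> k l _ _ [].
have -> : (s0 \notin G n.+1 (n./2).+1 (fun k => k.+1) (fun k => (n - k).+1) (fun _ => n.+1)) = true.
  apply/negP => /(memG hb) [k [_ e1 _ _]].
  by move: e1; rewrite /s0 /= inordK.
by [].
Qed.

Lemma tree_card n : (1 <= n)%N -> tree_count 0 n = n./2.
Proof.
move=> hn.
have hb : forall k, (k < n./2)%N ->
   [/\ (k.+1 < n.+1)%N, (n - k.+1 < n.+1)%N & (n < n.+1)%N].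
  by move=> k hk; split; lia.
rewrite /tree_count.
have -> : [set t : 'I_n.+1 * 'I_n.+1 * 'I_n.+1 |
       let T := (nat_of_ord t.1.1, nat_of_ord t.1.2, nat_of_ord t.2) in
       asbool (exists alpha : nat, (1 <= alpha)%N /\ on_tree alpha 0 T)
       && (max3 T == n)]
   = G n (n./2) (fun k => k.+1) (fun k => n - k.+1)%N (fun _ => n).
  apply/setP => s; rewrite !inE /=.
  apply/idP/idP.
    case/andP => /asboolP [al [hal Ht]] /eqP hm.
    have [h1 h2 h3] := @tree_inv al _ hal Ht.
    apply/(memG hb); exists (nat_of_ord s.1.1).-1.
    move: h1 h2 h3 hm; rewrite /max3 /=.
    set a := nat_of_ord s.1.1; set b := nat_of_ord s.1.2; set c := nat_of_ord s.2.
    move=> h1 h2 h3 hm; rewrite h3 in hm; split; lia.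
  case/(memG hb) => k [hk e1 e2 e3].
  apply/andP; split.
    apply/asboolP.
    have [al [hal H]] := @tree_all n k.+1 (n - k.+1)%N ltac:(lia) ltac:(lia) ltac:(lia).
    exists al; split => //.
    rewrite e1 e2 e3.
    have e : (k.+1 + (n - k.+1))%N = n by lia.
    by move: H; rewrite e.
  by rewrite /max3 /= e1 e2 e3; apply/eqP; lia.
by rewrite (cardG hb) // => k l _ _ [].
Qed.

Theorem lemma3p1 (K : fieldType) (A : K) :
  ~~ (2%N \in [pchar K]) ->
  (exists i : K, i ^+ 2 = -1) ->
  A != 0 ->
  forall n : nat, (1 <= n)%N ->
    CA A n = (tree_count 0 n + 2)%N /\ CA A n = (Cbeta 0 n + 1)%N.
Proof.
move=> hch [i hi] A0 n hn.
have h2 : (2%:R : K) != 0 by move: hch; rewrite inE.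
rewrite /Cbeta (@CA_card K A i A0 hi h2 n hn) (@tree_card n hn).
split; lia.
Qed.
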